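(* There is a set $E$ of natural numbers with $|\{n\in E: n\le x\}| = o(x/\log x)$ as $x\to\infty$ such that, for $n\notin E$, $$ \sum_{m\ge 2}\frac1m\sum_{\substack{q \text{ prime}\\ q^m\equiv \pm1 \ (\mathrm{mod}\ n)}}\frac{1}{q^m} = o\left(\frac1n\right) \quad (n\to\infty). $$
   Context: The inner sum runs over primes $q$ with $q^m\equiv 1$ or $q^m\equiv -1 \pmod n$. *)

(* Defs.v *)
From Stdlib Require Import Reals ZArith Znumtheory List Arith.
From Coquelicot Require Import Coquelicot.
Open Scope R_scope.

Definition pm1_mod (n q m : nat) : bool :=
  (Z.eqb (Z.modulo (Z.of_nat q ^ Z.of_nat m - 1) (Z.of_nat n)) 0
   || Z.eqb (Z.modulo (Z.of_nat q ^ Z.of_nat m + 1) (Z.of_nat n)) 0)%bool.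

Definition inner_term (n m q : nat) : R :=
  if prime_dec (Z.of_nat q) then
    (if pm1_mod n q m then / (INR q ^ m) else 0)
  else 0.

Definition Ssum (n : nat) : R :=
  Series (fun m : nat =>
    if (m <? 2)%nat then 0 else / INR m * Series (fun q : nat => inner_term n m q)).

Definition count_upto (E : nat -> bool) (N : nat) : nat :=
  length (filter E (seq 0 (S N))).

(* Main.v *)
Require Import Defs.
From Stdlib Require Import Reals ZArith Znumtheory List Arith Lra Lia.
From Coquelicot Require Import Coquelicot.
Open Scope R_scope.

Lemma ln_le_sub1 y : 0 < y -> ln y <= y - 1.
Proof. intros Hy. pose proof (exp_ineq1_le (ln y)). rewrite exp_ln in H; lra. Qed.

Lemma key_ineq s x : 1 < s -> 2 <= x ->
  (s-1) * Rpower x (-s) <= Rpower (x-1) (1-s) - Rpower x (1-s).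
Proof.
  intros Hs Hx. unfold Rpower.
  assert (Hl : ln (x-1) <= ln x - / x).
  { assert (H1 : ln ((x-1)/x) <= (x-1)/x - 1) by (apply ln_le_sub1; apply Rdiv_lt_0_compat; lra).
    rewrite ln_div in H1 by lra.
    replace ((x-1)/x - 1) with (- / x) in H1 by (field; lra). lra. }
  assert (H2 : (1 - s) * ln x + (s-1) / x <= (1-s) * ln (x-1)).
  { replace ((s-1)/x) with ((1-s) * (- / x)) by (field; lra). nra. }
  assert (H3 : exp ((1 - s) * ln x + (s-1)/x) <= exp ((1-s) * ln (x-1))).
  { destruct (Req_dec ((1 - s) * ln x + (s-1)/x) ((1-s) * ln (x-1))) as [E|E].
    rewrite E; lra. left; apply exp_increasing; lra. }
  rewrite exp_plus in H3.
  pose proof (exp_ineq1_le ((s-1)/x)).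
  assert (E1 : exp (- s * ln x) = exp ((1-s) * ln x) / x).
  { replace (- s * ln x) with ((1-s) * ln x + - ln x) by ring.
    rewrite exp_plus, exp_Ropp, exp_ln by lra. reflexivity. }
  rewrite E1.
  assert (0 < exp ((1-s) * ln x)) by apply exp_pos.
  assert (exp ((1 - s) * ln x) * (1 + (s-1)/x) <= exp ((1 - s) * ln x) * exp ((s - 1) / x)).
  { apply Rmult_le_compat_l; lra. }
  replace ((s - 1) * (exp ((1 - s) * ln x) / x)) with (exp ((1 - s) * ln x) * (1 + (s-1)/x) - exp ((1 - s) * ln x)) by (field; lra).
  lra.
Qed.

Definition psa (s : R) (q : nat) : R := if (q <? 2)%nat then 0 else Rpower (INR q) (-s).

Lemma psa_nonneg s q : 0 <= psa s q.
Proof. unfold psa. destruct (q <? 2)%nat. lra. unfold Rpower. left; apply exp_pos. Qed.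

Lemma psum_partial s N : 1 < s -> (1 <= N)%nat ->
  sum_f_R0 (psa s) N <= (1 - Rpower (INR N) (1-s)) / (s-1).
Proof.
  intros Hs HN. induction N as [|N IH]. lia.
  destruct N as [|N].
  - simpl. unfold psa. simpl. unfold Rpower. rewrite ln_1, Rmult_0_r, exp_0.
    replace ((1-1)/(s-1)) with 0 by (field; lra). lra.
  - rewrite tech5. specialize (IH ltac:(lia)).
    assert (Hk := key_ineq s (INR (S (S N))) Hs).
    assert (2 <= INR (S (S N))) by (rewrite !S_INR; pose proof (pos_INR N); lra).
    specialize (Hk H).
    replace (INR (S (S N)) - 1) with (INR (S N)) in Hk by (rewrite (S_INR (S N)); ring).
    unfold psa at 2. simpl Nat.ltb.
    apply Rle_trans with ((1 - Rpower (INR (S N)) (1 - s)) / (s - 1) +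
      (Rpower (INR (S N)) (1 - s) - Rpower (INR (S (S N))) (1 - s)) / (s-1)).
    + apply Rplus_le_compat. exact IH.
      apply Rmult_le_reg_l with (s-1). lra.
      replace ((s - 1) * ((Rpower (INR (S N)) (1 - s) - Rpower (INR (S (S N))) (1 - s)) / (s - 1)))
        with (Rpower (INR (S N)) (1 - s) - Rpower (INR (S (S N))) (1 - s)) by (field; lra).
      exact Hk.
    + right; field; lra.
Qed.

Lemma psum_ex s : 1 < s -> ex_series (psa s).
Proof.
  intros Hs.
  assert (Hb : forall N, sum_f_R0 (psa s) N <= 1 / (s-1)).
  { intros N. destruct N as [|N].
    - simpl. unfold psa. simpl. apply Rlt_le, Rdiv_lt_0_compat; lra.
    - eapply Rle_trans. apply psum_partial; [lra|lia].
      unfold Rdiv. apply Rmult_le_compat_r. left; apply Rinv_0_lt_compat; lra.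
      unfold Rpower. pose proof (exp_pos ((1 - s) * ln (INR (S N)))). lra. }
  assert (Hf : ex_finite_lim_seq (sum_f_R0 (psa s))).
  { apply ex_finite_lim_seq_incr with (1/(s-1)). intros n. simpl.
    pose proof (psa_nonneg s (S n)). lra. exact Hb. }
  destruct Hf as [l Hl].
  apply ex_series_Reals_1. exists l. apply is_lim_seq_Reals. exact Hl.
Qed.

Lemma Rpower_pos x y : 0 < Rpower x y.
Proof. unfold Rpower; apply exp_pos. Qed.

Definition cE := 1/72.

Definition Eof (f : nat -> R) (n : nat) : bool :=
  match n with
  | O => false
  | _ => if Rlt_dec (Rpower (INR n) (- cE)) (INR n * f n) then true else false
  end.

Lemma count_upto_S E M :
  count_upto E (S M) = (count_upto E M + (if E (S M) then 1 else 0))%nat.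
Proof.
  unfold count_upto. rewrite (seq_S (S M) 0). rewrite filter_app, length_app.
  simpl. destruct (E (S M)); simpl; lia.
Qed.

Lemma count_bound (f : nat -> R) (HS : forall n, 0 <= f n) N M :
  (1 <= N)%nat -> (M <= N)%nat ->
  INR (count_upto (Eof f) M) <= Rpower (INR N) cE * sum_f_R0 (fun n => INR n * f n) M.
Proof.
  intros HN. induction M as [|M IH]; intros HM.
  - unfold count_upto. simpl. rewrite Rmult_0_l, Rmult_0_r. lra.
  - rewrite count_upto_S, plus_INR, tech5, Rmult_plus_distr_l.
    specialize (IH ltac:(lia)).
    assert (Hn : 0 < INR (S M)) by (apply lt_0_INR; lia).
    assert (HNM : INR (S M) <= INR N) by (apply le_INR; lia).
    assert (Hp : 0 <= INR (S M) * f (S M)) by (apply Rmult_le_pos; [lra| apply HS]).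
    assert (HcN : Rpower (INR (S M)) cE <= Rpower (INR N) cE).
    { apply Rle_Rpower_l. unfold cE; lra. lra. }
    destruct (Eof f (S M)) eqn:HE.
    + assert (Hl : Rpower (INR (S M)) (- cE) < INR (S M) * f (S M)).
      { unfold Eof in HE. destruct (Rlt_dec (Rpower (INR (S M)) (- cE)) (INR (S M) * f (S M))); auto; discriminate. }
      assert (1 < Rpower (INR (S M)) cE * (INR (S M) * f (S M))).
      { rewrite Rpower_Ropp in Hl. pose proof (Rpower_pos (INR (S M)) cE).
        apply Rmult_lt_compat_l with (r := Rpower (INR (S M)) cE) in Hl; auto.
        rewrite Rinv_r in Hl; [lra| apply Rgt_not_eq; lra]. }
      assert (Rpower (INR (S M)) cE * (INR (S M) * f (S M)) <= Rpower (INR N) cE * (INR (S M) * f (S M))).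
      { apply Rmult_le_compat_r; auto. }
      change (INR 1) with 1. lra.
    + change (INR 0) with 0. pose proof (Rpower_pos (INR N) cE).
      assert (0 <= Rpower (INR N) cE * (INR (S M) * f (S M))) by (apply Rmult_le_pos; lra).
      lra.
Qed.

Lemma INR_Int_part x : 0 <= x -> INR (Z.to_nat (Int_part x)) = IZR (Int_part x).
Proof.
  intros Hx. destruct (base_Int_part x) as [H1 H2].
  assert (0 <= Int_part x)%Z.
  { assert (-1 < Int_part x)%Z by (apply lt_IZR; simpl; lra). lia. }
  rewrite INR_IZR_INZ, Z2Nat.id; auto.
Qed.

Lemma final_from (f : nat -> R) (HS : forall n, 0 <= f n) (K : R) (HK : 0 <= K)
  (HW : forall N, (1 <= N)%nat -> sum_f_R0 (fun n => INR n * f n) N <= K * Rpower (INR N) (35/36)) :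
  exists E : nat -> bool,
    is_lim (fun x : R => INR (count_upto E (Z.to_nat (Int_part x))) / (x / ln x)) p_infty 0 /\
    (forall eps : R, 0 < eps -> exists N : nat, forall n : nat, (N <= n)%nat -> E n = false ->
         Rabs (f n) <= eps * / INR n).
Proof.
  exists (Eof f). split.
  - apply is_lim_spec. intros eps. simpl.
    set (L := 144 * K + 1).
    assert (HL : 0 < L) by (unfold L; lra).
    assert (He : 0 < eps / L) by (apply Rdiv_lt_0_compat; [apply cond_pos | lra]).
    exists (Rmax 2 (exp (-144 * ln (eps / L)))). intros x Hx.
    assert (Hx2 : 2 < x) by (eapply Rle_lt_trans; [apply Rmax_l | exact Hx]).
    assert (Hxe : exp (-144 * ln (eps / L)) < x) by (eapply Rle_lt_trans; [apply Rmax_r | exact Hx]).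
    assert (Hlnx : -144 * ln (eps / L) < ln x).
    { rewrite <- (ln_exp (-144 * ln (eps / L))). apply ln_increasing. apply exp_pos. exact Hxe. }
    set (N := Z.to_nat (Int_part x)).
    destruct (base_Int_part x) as [H1 H2].
    assert (HN : INR N = IZR (Int_part x)) by (apply INR_Int_part; lra).
    assert (HN1 : (1 <= N)%nat).
    { assert (INR 0 < INR N) by (simpl; lra). apply INR_lt in H. lia. }
    assert (HNx : INR N <= x) by lra.
    assert (HN0 : 0 < INR N) by lra.
    assert (Hc := count_bound f HS N N HN1 (le_n N)).
    assert (HWN := HW N HN1).
    assert (Hcnt : INR (count_upto (Eof f) N) <= K * Rpower x (71/72)).
    { eapply Rle_trans. exact Hc.
      pose proof (Rpower_pos (INR N) cE).
      eapply Rle_trans. apply Rmult_le_compat_l. lra. exact HWN.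
      replace (Rpower (INR N) cE * (K * Rpower (INR N) (35 / 36))) with (K * (Rpower (INR N) cE * Rpower (INR N) (35 / 36))) by ring.
      rewrite <- Rpower_plus. apply Rmult_le_compat_l. lra.
      unfold cE. replace (1/72 + 35/36) with (71/72) by field.
      apply Rle_Rpower_l. lra. lra. }
    assert (Hln0 : 0 < ln x) by (rewrite <- ln_1; apply ln_increasing; lra).
    assert (Hlnb : ln x <= 144 * Rpower x (1/144)).
    { assert (ln x = 144 * ln (Rpower x (1/144))) by (rewrite ln_Rpower; field).
      rewrite H. pose proof (ln_le_sub1 (Rpower x (1/144)) (Rpower_pos _ _)). lra. }
    assert (Hpos : 0 <= INR (count_upto (Eof f) N)) by apply pos_INR.
    assert (Hy : Rpower x (-(1/144)) < eps / L).
    { unfold Rpower at 1. rewrite <- (exp_ln (eps / L)) by exact He. apply exp_increasing. lra. }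
    assert (Hid : Rpower x (71/72) * Rpower x (1/144) / x = Rpower x (-(1/144))).
    { rewrite <- Rpower_plus. rewrite <- (Rpower_1 x) at 2 by lra. unfold Rdiv. rewrite <- Rpower_Ropp.
      rewrite <- Rpower_plus. f_equal. field. }
    rewrite Rminus_0_r. rewrite Rabs_pos_eq.
    2:{ unfold Rdiv. apply Rmult_le_pos. auto. left; apply Rinv_0_lt_compat, Rdiv_lt_0_compat; lra. }
    replace (INR (count_upto (Eof f) N) / (x / ln x)) with (INR (count_upto (Eof f) N) * ln x / x) by (field; lra).
    apply Rle_lt_trans with (K * Rpower x (71/72) * (144 * Rpower x (1/144)) / x).
    { unfold Rdiv. apply Rmult_le_compat_r. left; apply Rinv_0_lt_compat; lra.
      apply Rmult_le_compat; auto; lra. }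
    replace (K * Rpower x (71 / 72) * (144 * Rpower x (1 / 144)) / x) with (144 * K * (Rpower x (71/72) * Rpower x (1/144) / x)) by (field; lra).
    rewrite Hid.
    pose proof (Rpower_pos x (-(1/144))).
    apply Rle_lt_trans with (L * Rpower x (-(1/144))).
    { apply Rmult_le_compat_r; unfold L; lra. }
    apply Rmult_lt_reg_l with (/ L). apply Rinv_0_lt_compat; lra.
    rewrite <- Rmult_assoc, Rinv_l by lra. rewrite Rmult_1_l.
    replace (/ L * eps) with (eps / L) by (unfold Rdiv; ring). exact Hy.
  - intros eps Heps.
    destruct (INR_archimed 1 (exp (72 * Rabs (ln eps)))) as [N0 HN0]. lra.
    rewrite Rmult_1_r in HN0.
    exists N0. intros n Hn HE.
    assert (HnN : INR N0 <= INR n) by (apply le_INR; exact Hn).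
    pose proof (exp_pos (72 * Rabs (ln eps))).
    assert (Hnpos : 0 < INR n) by lra.
    destruct n as [|k]. simpl in Hnpos; lra.
    assert (Hle : INR (S k) * f (S k) <= Rpower (INR (S k)) (- cE)).
    { unfold Eof in HE. destruct (Rlt_dec (Rpower (INR (S k)) (- cE)) (INR (S k) * f (S k))). discriminate. lra. }
    assert (Hln : 72 * Rabs (ln eps) < ln (INR (S k))).
    { rewrite <- (ln_exp (72 * Rabs (ln eps))). apply ln_increasing. auto. lra. }
    assert (Hp : Rpower (INR (S k)) (- cE) < eps).
    { unfold Rpower. rewrite <- (exp_ln eps) by exact Heps. apply exp_increasing.
      unfold cE. pose proof (Rle_abs (- ln eps)). rewrite Rabs_Ropp in H0. lra. }
    rewrite Rabs_pos_eq by apply HS.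
    apply Rmult_le_reg_l with (INR (S k)). exact Hnpos.
    replace (INR (S k) * (eps * / INR (S k))) with eps by (field; lra). lra.
Qed.

Definition dv (n k : nat) : bool := Nat.eqb (k mod n) 0.
Definition cnt (N k : nat) : nat := length (filter (fun n => dv n k) (seq 0 (S N))).
Definition dvt (n k : nat) : R := if dv n k then INR n else 0.

Lemma dvt_nonneg n k : 0 <= dvt n k.
Proof. unfold dvt. destruct (dv n k). apply pos_INR. lra. Qed.

Lemma cnt_S N k : cnt (S N) k = (cnt N k + (if dv (S N) k then 1 else 0))%nat.
Proof.
  unfold cnt. rewrite (seq_S (S N) 0). rewrite filter_app, length_app.
  simpl. destruct (dv (S N) k); simpl; lia.
Qed.

Lemma dv_le n k : (0 < k)%nat -> dv n k = true -> (n <= k)%nat.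
Proof.
  intros Hk H. unfold dv in H. apply Nat.eqb_eq in H.
  destruct n as [|n]. simpl in H. lia.
  apply Nat.mod_divides in H; [|lia]. destruct H as [c Hc].
  destruct c; lia.
Qed.

Lemma dsum_le N k : (0 < k)%nat ->
  sum_f_R0 (fun n => dvt n k) N <= Rmin (INR N) (INR k) * INR (cnt N k).
Proof.
  intros Hk. induction N as [|N IH].
  - simpl. unfold dvt. destruct (dv 0 k); simpl; pose proof (pos_INR (cnt 0 k)).
    + rewrite Rmin_left by (apply pos_INR). lra.
    + rewrite Rmin_left by (apply pos_INR). lra.
  - rewrite tech5, cnt_S, plus_INR.
    assert (Hm : Rmin (INR N) (INR k) <= Rmin (INR (S N)) (INR k)).
    { apply Rle_min_compat_r. apply le_INR; lia. }
    assert (Hm0 : 0 <= Rmin (INR N) (INR k)) by (apply Rmin_glb; apply pos_INR).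
    pose proof (pos_INR (cnt N k)).
    unfold dvt at 2. destruct (dv (S N) k) eqn:Hd.
    + assert (HSk := dv_le _ _ Hk Hd).
      rewrite (Rmin_left (INR (S N))) by (apply le_INR; exact HSk).
      rewrite (Rmin_left (INR (S N))) in Hm by (apply le_INR; exact HSk).
      simpl (INR 1).
      assert (Rmin (INR N) (INR k) * INR (cnt N k) <= INR (S N) * INR (cnt N k)) by (apply Rmult_le_compat_r; lra).
      lra.
    + simpl (INR 0).
      assert (Rmin (INR N) (INR k) * INR (cnt N k) <= Rmin (INR (S N)) (INR k) * INR (cnt N k)) by (apply Rmult_le_compat_r; lra).
      lra.
Qed.

Definition C9 := Rpower 560 (1/9).

Definition TauH := forall N k, (0 < k)%nat -> (cnt N k ^ 9 <= 560 * k ^ 4)%nat.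

Lemma cnt_real (HT : TauH) N k : (0 < k)%nat -> INR (cnt N k) <= C9 * Rpower (INR k) (4/9).
Proof.
  intros Hk. pose proof (HT N k Hk) as H.
  apply le_INR in H. rewrite mult_INR, !pow_INR in H.
  assert (Hk0 : 0 < INR k) by (apply lt_0_INR; lia).
  destruct (Nat.eq_dec (cnt N k) 0) as [E|E].
  - rewrite E. simpl. unfold C9. pose proof (Rpower_pos 560 (1/9)). pose proof (Rpower_pos (INR k) (4/9)).
    apply Rlt_le, Rmult_lt_0_compat; lra.
  - assert (Ht : 0 < INR (cnt N k)) by (apply lt_0_INR; lia).
    assert (E1 : INR (cnt N k) = Rpower (INR (cnt N k) ^ 9) (1/9)).
    { rewrite <- (Rpower_pow 9) by exact Ht. rewrite Rpower_mult.
      replace (INR 9 * (1/9)) with 1 by (simpl; field). rewrite Rpower_1; auto. }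
    rewrite E1. unfold C9.
    replace (Rpower (INR k) (4/9)) with (Rpower (INR k ^ 4) (1/9)).
    2:{ rewrite <- (Rpower_pow 4) by exact Hk0. rewrite Rpower_mult. f_equal. simpl. field. }
    rewrite Rpower_mult_distr by (try lra; apply pow_lt; lra).
    apply Rle_Rpower_l. lra. split. apply pow_lt; lra. simpl (INR 560) in H.
    replace (INR 560) with 560 in H. lra. simpl. ring.
Qed.

Lemma zmod_eq a n : Z.eqb (Z.of_nat a mod Z.of_nat n) 0 = Nat.eqb (a mod n) 0.
Proof.
  rewrite <- Nat2Z.inj_mod.
  destruct (Nat.eqb_spec (a mod n) 0) as [E|E].
  - rewrite E. reflexivity.
  - apply Z.eqb_neq. lia.
Qed.

Lemma pm1_dv n q m : (1 <= q ^ m)%nat ->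
  pm1_mod n q m = (dv n (q ^ m - 1) || dv n (q ^ m + 1))%bool.
Proof.
  intros H. unfold pm1_mod, dv.
  replace (Z.of_nat q ^ Z.of_nat m - 1)%Z with (Z.of_nat (q ^ m - 1)).
  2:{ rewrite Nat2Z.inj_sub by exact H. rewrite Nat2Z.inj_pow. reflexivity. }
  replace (Z.of_nat q ^ Z.of_nat m + 1)%Z with (Z.of_nat (q ^ m + 1)).
  2:{ rewrite Nat2Z.inj_add, Nat2Z.inj_pow. reflexivity. }
  rewrite !zmod_eq. reflexivity.
Qed.

Lemma prime_ge2 q : prime (Z.of_nat q) -> (2 <= q)%nat.
Proof. intros H. apply prime_ge_2 in H. lia. Qed.

Lemma inner_nonneg n m q : 0 <= inner_term n m q.
Proof.
  unfold inner_term. destruct (prime_dec (Z.of_nat q)) as [Hp|Hp]; [|lra].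
  destruct (pm1_mod n q m); [|lra].
  apply prime_ge2 in Hp. left. apply Rinv_0_lt_compat, pow_lt.
  apply lt_0_INR; lia.
Qed.

Lemma inner_le n m q : prime (Z.of_nat q) ->
  INR n * inner_term n m q <= / (INR q ^ m) * (dvt n (q ^ m - 1) + dvt n (q ^ m + 1)).
Proof.
  intros Hp. pose proof (prime_ge2 _ Hp) as Hq.
  assert (HQ : (1 <= q ^ m)%nat) by (apply Nat.le_succ_l, Nat.neq_0_lt_0, Nat.pow_nonzero; lia).
  assert (Hi : 0 < / (INR q ^ m)) by (apply Rinv_0_lt_compat, pow_lt, lt_0_INR; lia).
  unfold inner_term. destruct (prime_dec (Z.of_nat q)) as [_|Hn]; [|contradiction].
  rewrite pm1_dv by exact HQ.
  pose proof (dvt_nonneg n (q ^ m - 1)). pose proof (dvt_nonneg n (q ^ m + 1)).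
  unfold dvt in *.
  destruct (dv n (q ^ m - 1)); destruct (dv n (q ^ m + 1)); simpl; try nra.
Qed.

Definition aE := 35/36.
Definition bE := 19/36.

Lemma min_interp x y a : 0 < x -> 0 < y -> 0 <= a <= 1 ->
  Rmin x y <= Rpower x a * Rpower y (1-a).
Proof.
  intros Hx Hy Ha. unfold Rmin. destruct (Rle_dec x y) as [H|H].
  - rewrite <- (Rpower_1 x) at 1 by exact Hx. replace 1 with (a + (1-a)) at 1 by ring.
    rewrite Rpower_plus. apply Rmult_le_compat_l. left; apply Rpower_pos.
    apply Rle_Rpower_l; lra.
  - rewrite <- (Rpower_1 y) at 1 by exact Hy. replace 1 with (a + (1-a)) at 1 by ring.
    rewrite Rpower_plus. apply Rmult_le_compat_r. left; apply Rpower_pos.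
    apply Rle_Rpower_l; lra.
Qed.

Lemma Dk_bound (HT : TauH) N k : (1 <= N)%nat -> (1 <= k)%nat ->
  sum_f_R0 (fun n => dvt n k) N <= C9 * Rpower (INR N) aE * Rpower (INR k) (17/36).
Proof.
  intros HN Hk.
  assert (HN0 : 0 < INR N) by (apply lt_0_INR; lia).
  assert (Hk0 : 0 < INR k) by (apply lt_0_INR; lia).
  eapply Rle_trans. apply dsum_le; lia.
  eapply Rle_trans. apply Rmult_le_compat.
  - apply Rmin_glb; lra.
  - apply pos_INR.
  - apply (min_interp _ _ aE HN0 Hk0). unfold aE; lra.
  - apply cnt_real; auto.
  - pose proof (Rpower_pos (INR N) aE).
    replace (Rpower (INR N) aE * Rpower (INR k) (1 - aE) * (C9 * Rpower (INR k) (4 / 9)))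
      with (C9 * Rpower (INR N) aE * (Rpower (INR k) (1 - aE) * Rpower (INR k) (4 / 9))) by ring.
    rewrite <- Rpower_plus. unfold aE. replace (1 - 35/36 + 4/9) with (17/36) by field. lra.
Qed.

Lemma sum_lin c (x y : nat -> R) N :
  sum_f_R0 (fun n => c * (x n + y n)) N = c * (sum_f_R0 x N + sum_f_R0 y N).
Proof. induction N as [|N IH]; simpl. ring. rewrite IH. ring. Qed.

Lemma key_mq (HT : TauH) N m q : (1 <= N)%nat -> (2 <= m)%nat -> (2 <= q)%nat ->
  sum_f_R0 (fun n => INR n * inner_term n m q) N <=
  4 * C9 * Rpower (INR N) aE * Rpower (INR q) (-(bE * INR m)).
Proof.
  intros HN Hm Hq.
  assert (HC : 0 <= 4 * C9 * Rpower (INR N) aE * Rpower (INR q) (-(bE * INR m))).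
  { unfold C9. pose proof (Rpower_pos 560 (1/9)). pose proof (Rpower_pos (INR N) aE).
    pose proof (Rpower_pos (INR q) (-(bE * INR m))).
    apply Rmult_le_pos; [|lra]. apply Rmult_le_pos; [|lra]. lra. }
  destruct (prime_dec (Z.of_nat q)) as [Hp|Hp].
  2:{ replace (sum_f_R0 (fun n => INR n * inner_term n m q) N) with (sum_f_R0 (fun _ => 0) N).
      rewrite sum_cte. lra.
      apply sum_eq. intros i _. unfold inner_term. destruct (prime_dec (Z.of_nat q)); [contradiction|ring]. }
  assert (HQ4 : (4 <= q ^ m)%nat).
  { replace 4%nat with (2 ^ 2)%nat by reflexivity.
    apply Nat.le_trans with (q ^ 2)%nat. apply Nat.pow_le_mono_l; lia.
    apply Nat.pow_le_mono_r; lia. }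
  set (Q := INR q ^ m).
  assert (HQ : INR (q ^ m) = Q) by (unfold Q; rewrite pow_INR; reflexivity).
  assert (HQ0 : 0 < Q) by (rewrite <- HQ; apply lt_0_INR; lia).
  eapply Rle_trans. apply sum_Rle. intros n _. apply inner_le. exact Hp.
  rewrite sum_lin.
  assert (HN0 : 0 < INR N) by (apply lt_0_INR; lia).
  assert (Hk : forall k, (1 <= k)%nat -> INR k <= 2 * Q ->
            sum_f_R0 (fun n => dvt n k) N <= 2 * C9 * Rpower (INR N) aE * Rpower Q (17/36)).
  { intros k Hk1 Hk2. eapply Rle_trans. apply Dk_bound; auto.
    assert (Hk0 : 0 < INR k) by (apply lt_0_INR; lia).
    pose proof (Rpower_pos (INR N) aE). unfold C9. pose proof (Rpower_pos 560 (1/9)).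
    assert (Rpower (INR k) (17/36) <= 2 * Rpower Q (17/36)).
    { eapply Rle_trans. apply Rle_Rpower_l. lra. split. exact Hk0. exact Hk2.
      rewrite <- Rpower_mult_distr by lra. apply Rmult_le_compat_r. left; apply Rpower_pos.
      rewrite <- (Rpower_1 2) at 2 by lra. apply Rle_Rpower; lra. }
    replace (2 * Rpower 560 (1 / 9) * Rpower (INR N) aE * Rpower Q (17 / 36))
      with (Rpower 560 (1 / 9) * Rpower (INR N) aE * (2 * Rpower Q (17 / 36))) by ring.
    apply Rmult_le_compat_l. apply Rmult_le_pos; lra. exact H1. }
  assert (H1 := Hk (q ^ m - 1)%nat ltac:(lia)).
  assert (H2 := Hk (q ^ m + 1)%nat ltac:(lia)).
  rewrite minus_INR in H1 by lia. rewrite plus_INR in H2. rewrite HQ in H1, H2. simpl (INR 1) in H1, H2.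
  assert (HQ4' : 4 <= Q).
  { rewrite <- HQ. apply le_INR in HQ4. replace (INR 4) with 4 in HQ4 by (simpl; ring). exact HQ4. }
  specialize (H1 ltac:(lra)). specialize (H2 ltac:(lra)). fold Q.
  eapply Rle_trans. apply Rmult_le_compat_l. left; apply Rinv_0_lt_compat; exact HQ0.
  apply Rplus_le_compat; [exact H1 | exact H2].
  assert (E : / Q * Rpower Q (17/36) = Rpower (INR q) (-(bE * INR m))).
  { rewrite <- (Rpower_1 Q) at 1 by exact HQ0. rewrite <- Rpower_Ropp, <- Rpower_plus.
    unfold Q. rewrite <- (Rpower_pow m) by (apply lt_0_INR; lia). rewrite Rpower_mult.
    f_equal. unfold bE. field. }
  replace (/ Q * (2 * C9 * Rpower (INR N) aE * Rpower Q (17 / 36) + 2 * C9 * Rpower (INR N) aE * Rpower Q (17 / 36)))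
    with (4 * C9 * Rpower (INR N) aE * (/ Q * Rpower Q (17/36))) by ring.
  rewrite E. lra.
Qed.

Definition r0 := Rpower 2 (- bE).
Definition Z0 := Series (psa (2 * bE)).
Definition Bq (m q : nat) : R := if (q <? 2)%nat then 0 else Rpower (INR q) (-(bE * INR m)).

Lemma r0_bounds : 0 < r0 < 1.
Proof.
  unfold r0. split. apply Rpower_pos.
  rewrite <- (Rpower_O 2) by lra. apply Rpower_lt. lra. unfold bE; lra.
Qed.

Lemma psa_ex2 : ex_series (psa (2 * bE)).
Proof. apply psum_ex. unfold bE; lra. Qed.

Lemma Rpower_nat_mul x y k : 0 < x -> Rpower x (INR k * y) = (Rpower x y) ^ k.
Proof. intros Hx. rewrite Rmult_comm, <- Rpower_mult, Rpower_pow. reflexivity. apply Rpower_pos. Qed.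

Lemma Bq_nonneg m q : 0 <= Bq m q.
Proof. unfold Bq. destruct (q <? 2)%nat. lra. left; apply Rpower_pos. Qed.

Lemma Bq_le m q : (2 <= m)%nat -> Bq m q <= psa (2 * bE) q * r0 ^ (m - 2).
Proof.
  intros Hm. unfold Bq, psa. destruct (q <? 2)%nat eqn:Hq. lra.
  apply Nat.ltb_ge in Hq.
  assert (Hq0 : 2 <= INR q) by (replace 2 with (INR 2) by (simpl; ring); apply le_INR; exact Hq).
  replace (-(bE * INR m)) with (-(2*bE) + INR (m-2) * (- bE)).
  2:{ rewrite minus_INR by exact Hm. simpl (INR 2). ring. }
  rewrite Rpower_plus. apply Rmult_le_compat_l. left; apply Rpower_pos.
  rewrite Rpower_nat_mul by lra. apply pow_incr. split. left; apply Rpower_pos.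
  unfold r0. rewrite !Rpower_Ropp. apply Rinv_le_contravar. apply Rpower_pos.
  apply Rle_Rpower_l. unfold bE; lra. lra.
Qed.

Lemma Bq_ex m : (2 <= m)%nat -> ex_series (Bq m).
Proof.
  intros Hm. apply (@ex_series_le R_AbsRing R_CompleteNormedModule _ (fun q => psa (2 * bE) q * r0 ^ (m - 2))).
  - intros q. unfold norm; simpl. unfold abs; simpl. rewrite Rabs_pos_eq by apply Bq_nonneg.
    apply Bq_le; exact Hm.
  - apply ex_series_scal_r. apply psa_ex2.
Qed.

Lemma Bq_series m : (2 <= m)%nat -> Series (Bq m) <= Z0 * r0 ^ (m - 2).
Proof.
  intros Hm. unfold Z0. rewrite <- Series_scal_r. apply Series_le.
  - intros q. split. apply Bq_nonneg. apply Bq_le; exact Hm.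
  - apply ex_series_scal_r. apply psa_ex2.
Qed.

Lemma inner_le_B n m q : (2 <= m)%nat -> inner_term n m q <= Bq m q.
Proof.
  intros Hm. unfold inner_term. destruct (prime_dec (Z.of_nat q)) as [Hp|Hp].
  2:{ apply Bq_nonneg. }
  pose proof (prime_ge2 _ Hp) as Hq.
  unfold Bq. destruct (q <? 2)%nat eqn:E. apply Nat.ltb_lt in E; lia.
  assert (Hq0 : 2 <= INR q) by (replace 2 with (INR 2) by (simpl; ring); apply le_INR; exact Hq).
  destruct (pm1_mod n q m). 2:{ left; apply Rpower_pos. }
  rewrite <- Rpower_pow by lra. rewrite <- Rpower_Ropp.
  apply Rle_Rpower. lra. assert (0 <= INR m) by apply pos_INR. unfold bE; nra.
Qed.

Lemma inner_ex n m : (2 <= m)%nat -> ex_series (inner_term n m).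
Proof.
  intros Hm. apply (@ex_series_le R_AbsRing R_CompleteNormedModule _ (Bq m)).
  - intros q. unfold norm; simpl. unfold abs; simpl. rewrite Rabs_pos_eq by apply inner_nonneg.
    apply inner_le_B; exact Hm.
  - apply Bq_ex; exact Hm.
Qed.

Definition Gm (m : nat) : R := if (m <? 2)%nat then 0 else Z0 * r0 ^ (m - 2).

Lemma Gm_ex : ex_series Gm.
Proof.
  apply (ex_series_incr_n Gm 2).
  apply (ex_series_ext (fun k => Z0 * r0 ^ k)).
  - intros k. unfold Gm. simpl. f_equal. f_equal. lia.
  - apply (ex_series_scal_l Z0 (fun k => r0 ^ k)). apply ex_series_geom.
    pose proof r0_bounds. rewrite Rabs_pos_eq; lra.
Qed.

Definition An (n m : nat) : R := if (m <? 2)%nat then 0 else / INR m * Series (inner_term n m).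

Lemma Ssum_An n : Ssum n = Series (An n).
Proof. reflexivity. Qed.

Lemma series_nonneg (a : nat -> R) : (forall n, 0 <= a n) -> ex_series a -> 0 <= Series a.
Proof.
  intros H He. assert (Series (fun _ => 0) <= Series a).
  { apply Series_le; auto. intros n; split; [lra | auto]. }
  rewrite (Series_ext (fun _ => 0) (fun n => 0 * 1)) in H0 by (intros; ring).
  rewrite Series_scal_l, Rmult_0_l in H0. exact H0.
Qed.

Lemma An_bounds n m : 0 <= An n m <= Gm m.
Proof.
  unfold An, Gm. destruct (m <? 2)%nat eqn:E. lra.
  apply Nat.ltb_ge in E.
  assert (HS : 0 <= Series (inner_term n m)) by (apply series_nonneg; [apply inner_nonneg | apply inner_ex; exact E]).
  assert (Hm : 2 <= INR m) by (replace 2 with (INR 2) by (simpl; ring); apply le_INR; exact E).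
  assert (Hi : 0 < / INR m <= 1).
  { split. apply Rinv_0_lt_compat; lra. rewrite <- Rinv_1. apply Rinv_le_contravar; lra. }
  split. apply Rmult_le_pos; lra.
  assert (Series (inner_term n m) <= Z0 * r0 ^ (m - 2)).
  { eapply Rle_trans. apply Series_le. intros q. split. apply inner_nonneg. apply inner_le_B; exact E.
    apply Bq_ex; exact E. apply Bq_series; exact E. }
  nra.
Qed.

Lemma An_ex n : ex_series (An n).
Proof.
  apply (@ex_series_le R_AbsRing R_CompleteNormedModule _ Gm).
  - intros m. unfold norm; simpl. unfold abs; simpl. destruct (An_bounds n m).
    rewrite Rabs_pos_eq; lra.
  - apply Gm_ex.
Qed.

Lemma Ssum_nonneg n : 0 <= Ssum n.
Proof. rewrite Ssum_An. apply series_nonneg. intros m; apply An_bounds. apply An_ex. Qed.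

Lemma exch (f : nat -> nat -> R) (Hf : forall n, ex_series (f n)) N :
  ex_series (fun m => sum_f_R0 (fun n => f n m) N) /\
  sum_f_R0 (fun n => Series (f n)) N = Series (fun m => sum_f_R0 (fun n => f n m) N).
Proof.
  induction N as [|N [IH1 IH2]].
  - simpl. split. apply (ex_series_ext (f 0%nat)). intros; reflexivity. apply Hf. reflexivity.
  - simpl. split.
    + apply (ex_series_ext (fun m => plus (sum_f_R0 (fun n => f n m) N) (f (S N) m))).
      intros; reflexivity. apply (@ex_series_plus R_AbsRing R_NormedModule); auto.
    + rewrite IH2. rewrite <- Series_plus; auto.
Qed.

Lemma W_bound (HT : TauH) N : (1 <= N)%nat ->
  sum_f_R0 (fun n => INR n * Ssum n) N <= (4 * C9 * Series Gm) * Rpower (INR N) aE.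
Proof.
  intros HN.
  set (Kc := 4 * C9 * Rpower (INR N) aE).
  assert (HKc : 0 <= Kc).
  { unfold Kc, C9. pose proof (Rpower_pos 560 (1/9)). pose proof (Rpower_pos (INR N) aE).
    apply Rmult_le_pos; lra. }
  assert (E1 : sum_f_R0 (fun n => INR n * Ssum n) N = sum_f_R0 (fun n => Series (fun m => INR n * An n m)) N).
  { apply sum_eq. intros i _. rewrite Series_scal_l. reflexivity. }
  assert (Hex : forall n, ex_series (fun m => INR n * An n m)).
  { intros n. apply (ex_series_ext (fun m => scal (INR n) (An n m))). intros; reflexivity.
    apply (@ex_series_scal_l R_AbsRing R_NormedModule). apply An_ex. }
  destruct (exch _ Hex N) as [Hex2 E2].
  rewrite E1, E2.
  replace (4 * C9 * Series Gm * Rpower (INR N) aE) with (Series (fun m => Kc * Gm m)).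
  2:{ rewrite Series_scal_l. unfold Kc. ring. }
  apply Series_le.
  2:{ apply (ex_series_ext (fun m => scal Kc (Gm m))). intros; reflexivity.
      apply (@ex_series_scal_l R_AbsRing R_NormedModule). apply Gm_ex. }
  intros m. split.
  { apply cond_pos_sum. intros n. apply Rmult_le_pos. apply pos_INR. apply An_bounds. }
  unfold An, Gm. destruct (m <? 2)%nat eqn:E.
  { rewrite (sum_eq _ (fun _ => 0)). rewrite sum_cte. lra. intros; ring. }
  apply Nat.ltb_ge in E.
  assert (Hm : 2 <= INR m) by (replace 2 with (INR 2) by (simpl; ring); apply le_INR; exact E).
  assert (E3 : sum_f_R0 (fun n => INR n * (/ INR m * Series (inner_term n m))) N =
               / INR m * sum_f_R0 (fun n => Series (fun q => INR n * inner_term n m q)) N).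
  { transitivity (sum_f_R0 (fun n => Series (fun q => INR n * inner_term n m q) * / INR m) N).
    apply sum_eq. intros i _. rewrite Series_scal_l. ring.
    rewrite <- scal_sum. ring. }
  rewrite E3.
  assert (Hex3 : forall n, ex_series (fun q => INR n * inner_term n m q)).
  { intros n. apply (ex_series_ext (fun q => scal (INR n) (inner_term n m q))). intros; reflexivity.
    apply (@ex_series_scal_l R_AbsRing R_NormedModule). apply inner_ex; exact E. }
  destruct (exch _ Hex3 N) as [Hex4 E4]. rewrite E4.
  set (X := Series (fun q => sum_f_R0 (fun n => INR n * inner_term n m q) N)).
  assert (HX : 0 <= X).
  { apply series_nonneg; auto. intros q. apply cond_pos_sum. intros n.
    apply Rmult_le_pos. apply pos_INR. apply inner_nonneg. }
  assert (HX2 : X <= Kc * (Z0 * r0 ^ (m - 2))).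
  { eapply Rle_trans with (Series (fun q => Kc * Bq m q)).
    - apply Series_le.
      + intros q. split.
        * apply cond_pos_sum. intros n. apply Rmult_le_pos. apply pos_INR. apply inner_nonneg.
        * unfold Bq. destruct (q <? 2)%nat eqn:Eq.
          -- rewrite (sum_eq _ (fun _ => 0)). rewrite sum_cte. lra.
             intros i _. unfold inner_term. destruct (prime_dec (Z.of_nat q)) as [Hp|Hp].
             apply prime_ge2 in Hp. apply Nat.ltb_lt in Eq. lia. ring.
          -- apply Nat.ltb_ge in Eq. unfold Kc. apply key_mq; auto.
      + apply (ex_series_ext (fun q => scal Kc (Bq m q))). intros; reflexivity.
        apply (@ex_series_scal_l R_AbsRing R_NormedModule). apply Bq_ex; exact E.
    - rewrite Series_scal_l. apply Rmult_le_compat_l. exact HKc. apply Bq_series; exact E. }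
  assert (Hi : 0 < / INR m <= 1).
  { split. apply Rinv_0_lt_compat; lra. rewrite <- Rinv_1. apply Rinv_le_contravar; lra. }
  nra.
Qed.

Theorem main_from_tau (HT : TauH) :
  exists E : nat -> bool,
    is_lim (fun x : R => INR (count_upto E (Z.to_nat (Int_part x))) / (x / ln x))
           p_infty 0 /\
    (forall eps : R, 0 < eps ->
       exists N : nat, forall n : nat, (N <= n)%nat -> E n = false ->
         Rabs (Ssum n) <= eps * / INR n).
Proof.
  apply (final_from Ssum Ssum_nonneg (4 * C9 * Series Gm)).
  - pose proof (series_nonneg Gm ltac:(intros m; pose proof (An_bounds 0 m); lra) Gm_ex).
    unfold C9. pose proof (Rpower_pos 560 (1/9)). apply Rmult_le_pos; lra.
  - intros N HN. apply (W_bound HT N HN).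
Qed.

Module DivM.
From mathcomp Require Import all_boot zify.
Local Open Scope nat_scope.
Local Set Implicit Arguments. Local Unset Strict Implicit.


Definition tau n := size (divisors n).

Lemma tau_mul u v : 0 < u -> 0 < v -> tau (u * v) <= tau u * tau v.
Proof.
move=> u0 v0; rewrite /tau -(size_allpairs muln).
apply: uniq_leq_size; first exact: divisors_uniq.
move=> d; rewrite -dvdn_divisors ?muln_gt0 ?u0 ?v0 // => dd.
apply/allpairsP.
set g := gcdn d u.
have g0 : 0 < g by rewrite gcdn_gt0 u0 orbT.
have gd : g %| d := dvdn_gcdl d u.
have gu : g %| u := dvdn_gcdr d u.
exists (g, d %/ g); split => /=.
- by rewrite -dvdn_divisors.
- rewrite -dvdn_divisors //.
  have cop : coprime (d %/ g) (u %/ g).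
    rewrite /coprime -(eqn_pmul2l g0) muln_gcdr ![g * _]mulnC !divnK //.
    by rewrite mul1n.
  rewrite -(Gauss_dvdr _ cop) -(dvdn_pmul2l g0) mulnA.
  rewrite [X in _ %| X * v]mulnC divnK // mulnC divnK //.
- by rewrite mulnC divnK.
Qed.

Lemma tau_pexp p e : prime p -> tau (p ^ e) <= e.+1.
Proof.
move=> pp; rewrite /tau.
apply: (@leq_trans (size (map (expn p) (iota 0 e.+1)))); last by rewrite size_map size_iota.
apply: uniq_leq_size; first exact: divisors_uniq.
move=> d; rewrite -dvdn_divisors ?expn_gt0 ?prime_gt0 //.
case/(dvdn_pfactor _ _ pp) => m me ->.
apply/mapP; exists m => //; by rewrite mem_iota /= add0n ltnS me.
Qed.

Lemma tau1 : tau 1 = 1. Proof. by []. Qed.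

Lemma p5_of p : prime p -> coprime 2 p -> coprime 3 p -> 5 <= p.
Proof. by case: p => [|[|[|[|[|]]]]]. Qed.

Lemma tau_cop6 n : 0 < n -> coprime 6 n -> tau n ^ 9 <= n ^ 4.
Proof.
elim: n {-2}n (leqnn n) => [|N IH] n nN n0 cop.
  by move: n0; rewrite leqn0 in nN; rewrite (eqP nN).
case: (ltnP 1 n) => n1; last first.
  have -> : n = 1 by apply/eqP; rewrite eqn_leq n1 n0.
  by rewrite tau1.
set p := pdiv n.
have pp : prime p := pdiv_prime n1.
have pn : p %| n := pdiv_dvd n.
set m := n %/ p.
have nE : n = p * m by rewrite /m mulnC divnK.
have m0 : 0 < m by move: n0; rewrite nE muln_gt0 => /andP[].
have p5 : 5 <= p.
  have c2 : coprime 2 p.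
    apply: (coprime_dvdr pn); apply: (coprime_dvdl _ cop); by [].
  have c3 : coprime 3 p.
    apply: (coprime_dvdr pn); apply: (coprime_dvdl _ cop); by [].
  exact: p5_of pp c2 c3.
have mlt : m <= N.
  have : m < n by rewrite nE -{1}(mul1n m) ltn_pmul2r // (leq_trans _ p5).
  by move=> h; rewrite -ltnS (leq_trans h nN).
have copm : coprime 6 m by apply: (coprime_dvdr _ cop); rewrite nE dvdn_mull.
have IHm := IH m mlt m0 copm.
have tn : tau n <= 2 * tau m.
  rewrite nE; apply: (leq_trans (tau_mul (prime_gt0 pp) m0)).
  by rewrite leq_mul2r (tau_pexp 1 pp) orbT.
apply: (@leq_trans ((2 * tau m) ^ 9)); first by rewrite leq_exp2r.
rewrite expnMn nE expnMn.
apply: leq_mul; last exact: IHm.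
apply: (@leq_trans (5 ^ 4)) => //; by rewrite leq_exp2r.
Qed.

Lemma aux2 a : 2 <= a -> a.+2 ^ 9 <= 16 * a.+1 ^ 9.
Proof.
move=> a2.
have h : (3 * a.+2) ^ 9 <= (4 * a.+1) ^ 9.
  rewrite leq_exp2r //; lia.
rewrite !expnMn in h.
rewrite -(@leq_pmul2l (3 ^ 9)) // mulnA.
apply: (leq_trans h); rewrite leq_mul2r; apply/orP; right; lia.
Qed.

Lemma aux3 b : 1 <= b -> b.+2 ^ 9 <= 81 * b.+1 ^ 9.
Proof.
move=> b1.
have h : (2 * b.+2) ^ 9 <= (3 * b.+1) ^ 9.
  rewrite leq_exp2r //; lia.
rewrite !expnMn in h.
rewrite -(@leq_pmul2l (2 ^ 9)) // mulnA.
apply: (leq_trans h); rewrite leq_mul2r; apply/orP; right; lia.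
Qed.

Lemma pow2b a : a.+1 ^ 9 <= 80 * 16 ^ a.
Proof.
elim: a => [|a IH]; first by [].
case: a IH => [|[|a]] IH; try lia.
apply: (leq_trans (aux2 _)) => //.
rewrite [X in _ <= _ * X]expnS mulnCA leq_pmul2l //.
Qed.

Lemma pow3b b : b.+1 ^ 9 <= 7 * 81 ^ b.
Proof.
elim: b => [|b IH]; first by [].
case: b IH => [|b] IH; try lia.
apply: (leq_trans (aux3 _)) => //.
rewrite [X in _ <= _ * X]expnS mulnCA leq_pmul2l //.
Qed.

Lemma tau_bound n : 0 < n -> tau n ^ 9 <= 560 * n ^ 4.
Proof.
move=> n0.
have [m2 c2 e2] := pfactor_coprime (isT : prime 2) n0.
have m20 : 0 < m2 by move: n0; rewrite e2 muln_gt0 => /andP[].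
have [m3 c3 e3] := pfactor_coprime (isT : prime 3) m20.
have m30 : 0 < m3 by move: m20; rewrite e3 muln_gt0 => /andP[].
set a := logn 2 n in e2. set b := logn 3 m2 in e3.
have c6 : coprime 6 m3.
  rewrite -[6]/(2 * 3) coprimeMl c3 andbT.
  by apply: (coprime_dvdr _ c2); rewrite e3 dvdn_mulr.
have t : tau n <= (tau m3 * b.+1) * a.+1.
  have p2 : 0 < 2 ^ a by rewrite expn_gt0.
  have p3 : 0 < 3 ^ b by rewrite expn_gt0.
  rewrite e2; apply: (leq_trans (tau_mul m20 p2)).
  apply: leq_mul; last exact: tau_pexp.
  rewrite e3; apply: (leq_trans (tau_mul m30 p3)).
  apply: leq_mul => //; exact: tau_pexp.
apply: (@leq_trans (((tau m3 * b.+1) * a.+1) ^ 9)); first by rewrite leq_exp2r.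
rewrite !expnMn e2 e3 !expnMn -!expnM.
have h1 := tau_cop6 m30 c6.
have h2 := pow3b b. have h3 := pow2b a.
have -> : 560 * (m3 ^ 4 * 3 ^ (b * 4) * 2 ^ (a * 4)) = (m3 ^ 4 * (7 * 81 ^ b)) * (80 * 16 ^ a).
  rewrite !(mulnC _ 4) !expnM. rewrite -[81]/(3^4) -[16]/(2^4) -!expnM. lia.
by apply: leq_mul => //; apply: leq_mul.
Qed.

Lemma seq_iota m n : List.seq m n = iota m n.
Proof. by elim: n m => //= n IH m; rewrite IH. Qed.

Lemma len_size (s : list nat) : List.length s = size s.
Proof. by elim: s => //= x s ->. Qed.

Lemma filter_eq (p : nat -> bool) (s : list nat) : List.filter p s = filter p s.
Proof. by elim: s => //= x s ->. Qed.

Lemma pow_expn x n : Nat.pow x n = expn x n.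
Proof. by elim: n => //= n IH; rewrite expnS -IH. Qed.

Lemma dv_dvdn x k : 0 < k -> dv x k = true -> x %| k.
Proof.
move=> k0; rewrite /dv => /Nat.eqb_eq Hd.
case: x Hd => [|x] Hd.
  by move: Hd k0 => /= ->.
apply/dvdnP.
have [c Hc] : exists c, k = (x.+1 * c)%coq_nat by apply Nat.mod_divides.
exists c; rewrite Hc; lia.
Qed.

Lemma cnt_tau N k : 0 < k -> cnt N k <= tau k.
Proof.
move=> k0; rewrite /cnt seq_iota filter_eq len_size /tau.
apply: uniq_leq_size; first by rewrite filter_uniq // iota_uniq.
move=> x; rewrite mem_filter => /andP [Hd _].
by rewrite -dvdn_divisors //; apply: dv_dvdn.
Qed.

Lemma tauH : TauH.
Proof.
move=> N k /ltP Hk; apply/leP.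
rewrite !pow_expn multE.
apply: (leq_trans _ (tau_bound Hk)).
by rewrite leq_exp2r // cnt_tau.
Qed.

End DivM.

Theorem proposition1 :
  exists E : nat -> bool,
    (* |{n in E : n <= x}| = o(x / log x) as x -> +oo (x real) *)
    is_lim (fun x : R => INR (count_upto E (Z.to_nat (Int_part x))) / (x / ln x))
           p_infty 0 /\
    (* for n not in E, Ssum n = o(1/n) as n -> oo *)
    (forall eps : R, 0 < eps ->
       exists N : nat, forall n : nat, (N <= n)%nat -> E n = false ->
         Rabs (Ssum n) <= eps * / INR n).
Proof.
  exact (main_from_tau DivM.tauH).
Qed.
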